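(* Let $\div$ be an AGM contraction operator for epistemic states. The following are equivalent: (a) $\div$ satisfies (C8) and (C9), i.e. for all epistemic states $\Psi$ and formulas $\alpha,\beta$: (C8) if $\neg\alpha\models\beta$ then $\mathrm{Bel}(\Psi\div\alpha\div\beta) =_\alpha \mathrm{Bel}(\Psi\div\beta)$; (C9) if $\alpha\models\beta$ then $\mathrm{Bel}(\Psi\div\alpha\div\beta) =_{\neg\beta} \mathrm{Bel}(\Psi\div\beta)$. (b) There is a faithful assignment $\Psi\mapsto\le_\Psi$ such that $[\![\Psi\div\alpha]\!]=[\![\Psi]\!]\cup\min([\![\neg\alpha]\!],\le_\Psi)$ for all $\Psi,\alpha$, and which satisfies for all $\Psi,\alpha$ and worlds $\omega_1,\omega_2$: (CR8) if $\omega_1,\omega_2\in[\![\alpha]\!]$ then $\omega_1\le_\Psi\omega_2 \Leftrightarrow \omega_1\le_{\Psi\div\alpha}\omega_2$; (CR9) if $\omega_1,\omega_2\in[\![\neg\alpha]\!]$ then $\omega_1\le_\Psi\omega_2 \Leftrightarrow \omega_1\le_{\Psi\div\alpha}\omega_2$.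
   Context: $\Sigma$ is a nonempty finite set of propositional variables, $\mathcal{L}$ the propositional language over $\Sigma$, $\Omega$ the set of worlds. $[\![\alpha]\!]$ is the set of models of $\alpha$; for a set $X$ of formulas $[\![X]\!]$ is the set of worlds satisfying all of $X$; $Cn(X)=\{\beta\mid X\models\beta\}$. $\mathcal{E}$ is a set of epistemic states; each $\Psi\in\mathcal{E}$ has a deductively closed belief set $\mathrm{Bel}(\Psi)\subseteq\mathcal{L}$; $\Psi\models\alpha$ iff $\alpha\in\mathrm{Bel}(\Psi)$; $[\![\Psi]\!]=[\![\mathrm{Bel}(\Psi)]\!]$. A belief change operator is a map $\div:\mathcal{E}\times\mathcal{L}\to\mathcal{E}$; $\Psi\div\alpha\div\beta$ means $(\Psi\div\alpha)\div\beta$. An AGM contraction operator for epistemic states is a belief change operator satisfying for all $\Psi,\alpha,\beta$: (C1) $\mathrm{Bel}(\Psi\div\alpha)\subseteq\mathrm{Bel}(\Psi)$; (C2) if $\alpha\notin\mathrm{Bel}(\Psi)$ then $\mathrm{Bel}(\Psi)\subseteq\mathrm{Bel}(\Psi\div\alpha)$; (C3) if $\alpha\not\equiv\top$ then $\alpha\notin\mathrm{Bel}(\Psi\div\alpha)$; (C4) $\mathrm{Bel}(\Psi)\subseteq Cn(\mathrm{Bel}(\Psi\div\alpha)\cup\{\alpha\})$; (C5) if $\alpha\equiv\beta$ then $\mathrm{Bel}(\Psi\div\alpha)=\mathrm{Bel}(\Psi\div\beta)$; (C6) $\mathrm{Bel}(\Psi\div\alpha)\cap\mathrm{Bel}(\Psi\div\beta)\subseteq\mathrm{Bel}(\Psi\div(\alpha\land\beta))$;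 (C7) if $\beta\notin\mathrm{Bel}(\Psi\div(\alpha\land\beta))$ then $\mathrm{Bel}(\Psi\div(\alpha\land\beta))\subseteq\mathrm{Bel}(\Psi\div\beta)$. For a total preorder $\le$ on $\Omega$ and $\Omega'\subseteq\Omega$, $\min(\Omega',\le)=\{\omega\in\Omega'\mid \omega\le\omega' \text{ for all }\omega'\in\Omega'\}$; $<$ is the strict part and $\simeq$ the induced equivalence. A faithful assignment maps each $\Psi$ to a total preorder $\le_\Psi$ on $\Omega$ with (FA1) $\omega_1,\omega_2\in[\![\Psi]\!]\Rightarrow\omega_1\simeq_\Psi\omega_2$ and (FA2) $\omega_1\in[\![\Psi]\!],\omega_2\notin[\![\Psi]\!]\Rightarrow\omega_1<_\Psi\omega_2$. Known fact: $\div$ is an AGM contraction operator for epistemic states iff there is a faithful assignment with $[\![\Psi\div\alpha]\!]=[\![\Psi]\!]\cup\min([\![\neg\alpha]\!],\le_\Psi)$ for all $\Psi,\alpha$. $\alpha$-equivalence: for $\Omega_1,\Omega_2\subseteq\Omega$, $\Omega_1=_\alpha\Omega_2$ iff $\Omega_1\cap[\![\alpha]\!]=\Omega_2\cap[\![\alpha]\!]$; for sets of formulas $X=_\alpha Y$ iff $[\![X]\!]=_\alpha[\![Y]\!]$. *)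

(* Defs.v *)
From mathcomp Require Import all_boot.
Set Implicit Arguments. Unset Strict Implicit. Unset Printing Implicit Defensive.

Inductive form (S : Type) : Type :=
  | FVar of S
  | FTop
  | FBot
  | FNeg of form S
  | FAnd of form S & form S
  | FOr of form S & form S
  | FImp of form S & form S.
Arguments FTop {S}. Arguments FBot {S}.

Definition world (S : finType) := {ffun S -> bool}.

Fixpoint sat (S : finType) (w : world S) (a : form S) : bool :=
  match a with
  | FVar x => w x
  | FTop => true
  | FBot => false
  | FNeg b => ~~ sat w b
  | FAnd b c => sat w b && sat w c
  | FOr b c => sat w b || sat w c
  | FImp b c => sat w b ==> sat w c
  end.

Definition wset (S : finType) := world S -> Prop.
Definition fset (S : finType) := form S -> Prop.

Definition set_eq (T : Type) (A B : T -> Prop) := forall x, A x <-> B x.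
Definition subset_of (T : Type) (A B : T -> Prop) := forall x, A x -> B x.
Definition set_cup (T : Type) (A B : T -> Prop) : T -> Prop := fun x => A x \/ B x.
Definition set_cap (T : Type) (A B : T -> Prop) : T -> Prop := fun x => A x /\ B x.

Definition mods (S : finType) (a : form S) : wset S := fun w => sat w a.
Definition modsX (S : finType) (X : fset S) : wset S :=
  fun w => forall b, X b -> sat w b.
Definition Cn (S : finType) (X : fset S) : fset S :=
  fun b => forall w, modsX X w -> sat w b.
Definition fentails (S : finType) (a b : form S) := forall w, sat w a -> sat w b.
Definition fequiv (S : finType) (a b : form S) := forall w, sat w a = sat w b.
Definition tautology (S : finType) (a : form S) := forall w, sat w a.

Definition deductively_closed (S : finType) (E : Type) (Bel : E -> fset S) :=
  forall Psi, subset_of (Cn (Bel Psi)) (Bel Psi).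

Definition AGM_contraction (S : finType) (E : Type) (Bel : E -> fset S)
    (div : E -> form S -> E) : Prop :=
  (forall Psi a, subset_of (Bel (div Psi a)) (Bel Psi)) /\
  (forall Psi a, ~ Bel Psi a -> subset_of (Bel Psi) (Bel (div Psi a))) /\
  (forall Psi a, ~ tautology a -> ~ Bel (div Psi a) a) /\
  (forall Psi a, subset_of (Bel Psi)
      (Cn (fun b => Bel (div Psi a) b \/ b = a))) /\
  (forall Psi a b, fequiv a b -> set_eq (Bel (div Psi a)) (Bel (div Psi b))) /\
  (forall Psi a b, subset_of (set_cap (Bel (div Psi a)) (Bel (div Psi b)))
                             (Bel (div Psi (FAnd a b)))) /\
  (forall Psi a b, ~ Bel (div Psi (FAnd a b)) b ->
      subset_of (Bel (div Psi (FAnd a b))) (Bel (div Psi b))).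

Definition total_preorder (T : Type) (le : T -> T -> Prop) :=
  (forall x y, le x y \/ le y x) /\ (forall x y z, le x y -> le y z -> le x z).

Definition lt_of (T : Type) (le : T -> T -> Prop) x y := le x y /\ ~ le y x.
Definition eqv_of (T : Type) (le : T -> T -> Prop) x y := le x y /\ le y x.

Definition min_le (T : Type) (A : T -> Prop) (le : T -> T -> Prop) : T -> Prop :=
  fun x => A x /\ forall y, A y -> le x y.

Definition faithful_assignment (S : finType) (E : Type) (Bel : E -> fset S)
    (fa : E -> world S -> world S -> Prop) : Prop :=
  (forall Psi, total_preorder (fa Psi)) /\
  (forall Psi w1 w2, modsX (Bel Psi) w1 -> modsX (Bel Psi) w2 ->
       eqv_of (fa Psi) w1 w2) /\
  (forall Psi w1 w2, modsX (Bel Psi) w1 -> ~ modsX (Bel Psi) w2 ->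
       lt_of (fa Psi) w1 w2).

Definition alpha_eq (S : finType) (a : form S) (X Y : fset S) :=
  set_eq (set_cap (modsX X) (mods a)) (set_cap (modsX Y) (mods a)).

Definition C8 (S : finType) (E : Type) (Bel : E -> fset S) (div : E -> form S -> E) :=
  forall Psi a b, fentails (FNeg a) b ->
    alpha_eq a (Bel (div (div Psi a) b)) (Bel (div Psi b)).
Definition C9 (S : finType) (E : Type) (Bel : E -> fset S) (div : E -> form S -> E) :=
  forall Psi a b, fentails a b ->
    alpha_eq (FNeg b) (Bel (div (div Psi a) b)) (Bel (div Psi b)).

Definition CR8 (S : finType) (E : Type) (div : E -> form S -> E)
    (fa : E -> world S -> world S -> Prop) :=
  forall Psi a w1 w2, mods a w1 -> mods a w2 ->
    (fa Psi w1 w2 <-> fa (div Psi a) w1 w2).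
Definition CR9 (S : finType) (E : Type) (div : E -> form S -> E)
    (fa : E -> world S -> world S -> Prop) :=
  forall Psi a w1 w2, mods (FNeg a) w1 -> mods (FNeg a) w2 ->
    (fa Psi w1 w2 <-> fa (div Psi a) w1 w2).

(* Main.v *)
Require Import Defs.
From mathcomp Require Import all_boot.
From Stdlib Require Import Classical.
Set Implicit Arguments. Unset Strict Implicit.
Section AbsS.
Variable W : eqType.
Variable M : W -> Prop.
Variable f : pred W -> W -> Prop.
Definition pU (A B : pred W) : pred W := fun w => A w || B w.
Definition p2 (a b : W) : pred W := fun w => (w == a) || (w == b).
Hypothesis Hext : forall A B, A =1 B -> forall w, f A w -> f B w.
Hypothesis P1 : forall (A : pred W) w, M w -> f A w.
Hypothesis P2 : forall (A : pred W) w0, M w0 -> A w0 -> forall w, f A w -> M w.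
Hypothesis P3 : forall (A : pred W) w, A w -> exists u, A u /\ f A u.
Hypothesis P4 : forall (A : pred W) w, f A w -> ~~ A w -> M w.
Hypothesis P6 : forall (A B : pred W) w, f (pU A B) w -> f A w \/ f B w.
Hypothesis P7 : forall (A B : pred W) u, B u -> f (pU A B) u -> forall w, f B w -> f (pU A B) w.
Definition le a b := f (p2 a b) a.

Lemma L1 (A B : pred W) w : (forall x, B x -> A x) -> B w -> f A w -> f B w.
Proof.
move=> sub Bw fA.
case: (classic (f B w)) => // nfB.
pose C : pred W := fun x => A x && (x != w).
have E : A =1 pU C B.
  move=> x; rewrite /pU /C.
  case Ax: (A x) => /=.
  - case: (x =P w) => [->|ne] /=; first by rewrite Bw.
    done.
  - case Bx: (B x) => //. by have := sub _ Bx; rewrite Ax.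
have fU := Hext E fA.
case: (P6 fU) => // fC.
apply: P1; apply: (P4 fC); by rewrite /C eqxx andbF.
Qed.

Lemma L2 (A : pred W) v w : A v -> f A v -> A w -> le w v -> f A w.
Proof.
move=> Av fAv Aw lwv.
have E : A =1 pU A (p2 w v).
  move=> x; rewrite /pU /p2.
  case Ax: (A x) => //=.
  case: (x =P w) => [E|_]; first by subst x; rewrite Aw in Ax.
  case: (x =P v) => [E|_] //; by subst x; rewrite Av in Ax.
have E' : pU A (p2 w v) =1 A by move=> x; rewrite E.
apply: (Hext E').
apply: (P7 (u:=v)); first by rewrite /p2 eqxx orbT.
  exact: (Hext E).
exact: lwv.
Qed.

Lemma minP (A : pred W) w : A w -> (f A w <-> forall y, A y -> le w y).
Proof.
move=> Aw; split.
- move=> fAw y Ay; apply: (L1 (A:=A)) => //.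
    by move=> x; rewrite /p2; case/orP => /eqP ->.
  by rewrite /p2 eqxx.
- move=> H. have [u [Au fAu]] := P3 Aw.
  exact: (L2 Au fAu Aw (H u Au)).
Qed.

Lemma le_refl w : le w w.
Proof.
have Hw : p2 w w w by rewrite /p2 eqxx.
have [u [Hu fu]] := P3 Hw.
by move: Hu fu; rewrite /p2 orbb => /eqP ->.
Qed.

Lemma p2C a b : p2 a b =1 p2 b a.
Proof. by move=> x; rewrite /p2 orbC. Qed.

Lemma le_total a b : le a b \/ le b a.
Proof.
have Ha : p2 a b a by rewrite /p2 eqxx.
have [u [Hu fu]] := P3 Ha.
move: Hu; rewrite /p2 => /orP [/eqP Eu|/eqP Eu]; subst u; first by left.
right; exact: (Hext (p2C a b)).
Qed.

Lemma le_trans a b c : le a b -> le b c -> le a c.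
Proof.
move=> lab lbc.
pose A : pred W := fun x => [|| x == a, x == b | x == c].
have Aa : A a by rewrite /A eqxx.
have Ab : A b by rewrite /A eqxx orbT.
have Ac : A c by rewrite /A eqxx !orbT.
have fAa : f A a.
  have [u [Au fAu]] := P3 Aa.
  move: Au; rewrite /A => /or3P [/eqP E|/eqP E|/eqP E]; subst u => //.
  - exact: (L2 Ab fAu Aa lab).
  - have fb := L2 Ac fAu Ab lbc. exact: (L2 Ab fb Aa lab).
apply: (L1 (A:=A)) => //; last by rewrite /p2 eqxx.
by move=> x; rewrite /p2 /A; case/orP => /eqP ->; rewrite eqxx ?orbT.
Qed.

Lemma FA2 a b : M a -> ~ M b -> le a b /\ ~ le b a.
Proof.
move=> Ma nMb; split; first exact: P1.
move=> lba; apply: nMb; apply: (@P2 (p2 b a) a Ma _ b lba).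
by rewrite /p2 eqxx orbT.
Qed.

Lemma reprF (A : pred W) w : f A w <-> M w \/ (A w /\ forall y, A y -> le w y).
Proof.
split.
- move=> fAw; case Aw: (A w).
  + by right; split => //; apply/(minP Aw).
  + left; apply: (P4 fAw); by rewrite Aw.
- case=> [Mw|[Aw H]]; first exact: P1.
  by apply/(minP Aw).
Qed.
End AbsS.

Section Forms.
Variable S : finType.
Definition lit (w : world S) (x : S) : form S := if w x then FVar x else FNeg (FVar x).
Definition chi (w : world S) : form S := foldr (fun x acc => FAnd (lit w x) acc) FTop (enum S).
Lemma sat_chi v w : sat v (chi w) = (v == w).
Proof.
have H : forall s, sat v (foldr (fun x acc => FAnd (lit w x) acc) FTop s) = all (fun x => v x == w x) s.
  elim=> [|x s IH] //=; rewrite IH /lit; case: (w x) => /=; by case: (v x).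
rewrite /chi H; apply/allP/eqP.
- move=> Hx; apply/ffunP => x; apply/eqP; apply: Hx; by rewrite mem_enum.
- by move=> -> x _.
Qed.
Definition fo (P : pred (world S)) : form S := foldr (fun w acc => FOr (chi w) acc) FBot (enum P).
Lemma sat_fo v P : sat v (fo P) = P v.
Proof.
have H : forall s, sat v (foldr (fun w acc => FOr (chi w) acc) FBot s) = (v \in s).
  elim=> [|w s IH] //=; by rewrite IH sat_chi in_cons.
by rewrite /fo H mem_enum.
Qed.
Definition phiC (A : pred (world S)) : form S := fo (fun w => ~~ A w).
Lemma sat_phiC v A : sat v (phiC A) = ~~ A v.
Proof. by rewrite /phiC sat_fo. Qed.
End Forms.
Unset Implicit Arguments.

Section Conc.
Variable S : finType.
Variable E : Type.
Variable Bel : E -> form S -> Prop.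
Hypothesis Hcl : deductively_closed Bel.
Variable div : E -> form S -> E.
Hypothesis Hagm : AGM_contraction Bel div.

Definition fP (Psi : E) (A : pred (world S)) (w : world S) : Prop :=
  modsX (Bel (div Psi (phiC A))) w.
Definition MP (Psi : E) : world S -> Prop := modsX (Bel Psi).

Lemma notin Psi b : ~ Bel Psi b -> exists w, modsX (Bel Psi) w /\ ~~ sat w b.
Proof.
move=> nb; apply: NNPP => H; apply: nb; apply: Hcl => w Mw; apply: NNPP => ns.
apply: H; exists w; split => //; by apply/negP.
Qed.

Lemma orL Psi b1 b2 : Bel Psi b1 -> Bel Psi (FOr b1 b2).
Proof. move=> H; apply: Hcl => w Mw /=; by rewrite (Mw _ H). Qed.
Lemma orR Psi b1 b2 : Bel Psi b2 -> Bel Psi (FOr b1 b2).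
Proof. move=> H; apply: Hcl => w Mw /=; by rewrite (Mw _ H) orbT. Qed.

Lemma Pext Psi : forall A B : pred (world S), A =1 B -> forall w, fP Psi A w -> fP Psi B w.
Proof.
case: Hagm => [C1 [C2 [C3 [C4 [C5 [C6 C7]]]]]].
move=> A B H w fw b Hb; apply: fw.
have eq : fequiv (phiC A) (phiC B) by move=> v; rewrite !sat_phiC H.
exact: (proj2 (C5 Psi _ _ eq b) Hb).
Qed.

Lemma PP1 Psi : forall (A : pred (world S)) w, MP Psi w -> fP Psi A w.
Proof.
case: Hagm => [C1 [C2 [C3 [C4 [C5 [C6 C7]]]]]].
move=> A w Mw b Hb; exact: Mw _ (C1 _ _ _ Hb).
Qed.

Lemma PP2 Psi : forall (A : pred (world S)) w0, MP Psi w0 -> A w0 -> forall w, fP Psi A w -> MP Psi w.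
Proof.
case: Hagm => [C1 [C2 [C3 [C4 [C5 [C6 C7]]]]]].
move=> A w0 Mw0 Aw0 w fw b Hb.
have nb : ~ Bel Psi (phiC A).
  move=> Hb'; have := Mw0 _ Hb'; by rewrite sat_phiC Aw0.
exact: fw _ (C2 _ _ nb _ Hb).
Qed.

Lemma PP3 Psi : forall (A : pred (world S)) w, A w -> exists u, A u /\ fP Psi A u.
Proof.
case: Hagm => [C1 [C2 [C3 [C4 [C5 [C6 C7]]]]]].
move=> A w Aw.
have nt : ~ tautology (phiC A) by move=> T; have := T w; rewrite sat_phiC Aw.
have [u [Mu nu]] := notin _ _ (C3 Psi _ nt).
exists u; split => //; by move: nu; rewrite sat_phiC negbK.
Qed.

Lemma PP4 Psi : forall (A : pred (world S)) w, fP Psi A w -> ~~ A w -> MP Psi w.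
Proof.
case: Hagm => [C1 [C2 [C3 [C4 [C5 [C6 C7]]]]]].
move=> A w fw nA b Hb.
apply: (C4 Psi (phiC A) _ Hb w) => c [Hc|->]; [exact: fw _ Hc | by rewrite sat_phiC].
Qed.

Lemma eqAnd (A B : pred (world S)) : fequiv (FAnd (phiC A) (phiC B)) (phiC (pU A B)).
Proof. move=> v /=; by rewrite !sat_phiC /pU negb_or. Qed.

Lemma PP6 Psi : forall (A B : pred (world S)) w, fP Psi (pU A B) w -> fP Psi A w \/ fP Psi B w.
Proof.
case: Hagm => [C1 [C2 [C3 [C4 [C5 [C6 C7]]]]]].
move=> A B w fU; apply: NNPP => H.
have nA : ~ fP Psi A w by move=> h; apply: H; left.
have nB : ~ fP Psi B w by move=> h; apply: H; right.
have [b1 h1] := not_all_ex_not _ _ nA.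
have [b2 h2] := not_all_ex_not _ _ nB.
have [Hb1 s1] := imply_to_and _ _ h1.
have [Hb2 s2] := imply_to_and _ _ h2.
have Hor : Bel (div Psi (FAnd (phiC A) (phiC B))) (FOr b1 b2).
  apply: C6; split; [exact: orL | exact: orR].
have := fU _ (proj1 (C5 Psi _ _ (eqAnd A B) _) Hor) => /=.
case/orP => h; [exact: s1 | exact: s2].
Qed.

Lemma PP7 Psi : forall (A B : pred (world S)) u, B u -> fP Psi (pU A B) u ->
  forall w, fP Psi B w -> fP Psi (pU A B) w.
Proof.
case: Hagm => [C1 [C2 [C3 [C4 [C5 [C6 C7]]]]]].
move=> A B u Bu fU w fB c Hc.
have nb : ~ Bel (div Psi (FAnd (phiC A) (phiC B))) (phiC B).
  move=> Hb; have := fU _ (proj1 (C5 Psi _ _ (eqAnd A B) _) Hb).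
  by rewrite sat_phiC Bu.
apply: fB; apply: (C7 _ _ _ nb); exact: (proj2 (C5 Psi _ _ (eqAnd A B) _) Hc).
Qed.

Lemma link Psi a w : modsX (Bel (div Psi a)) w <-> fP Psi (fun v => ~~ sat v a) w.
Proof.
case: Hagm => [C1 [C2 [C3 [C4 [C5 [C6 C7]]]]]].
have eq : fequiv a (phiC (fun v => ~~ sat v a)) by move=> v; rewrite sat_phiC negbK.
split => H b Hb; apply: H; [exact: (proj2 (C5 Psi _ _ eq b) Hb) | exact: (proj1 (C5 Psi _ _ eq b) Hb)].
Qed.

End Conc.

Theorem mainTheorem4 (S : finType) (HS : 0 < #|S|) (E : Type)
    (Bel : E -> form S -> Prop) (Hcl : deductively_closed Bel)
    (div : E -> form S -> E) (Hagm : AGM_contraction Bel div) :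
  (C8 Bel div /\ C9 Bel div) <->
  (exists fa : E -> world S -> world S -> Prop,
     faithful_assignment Bel fa /\
     (forall Psi a, set_eq (modsX (Bel (div Psi a)))
                           (set_cup (modsX (Bel Psi)) (min_le (mods (FNeg a)) (fa Psi)))) /\
     CR8 div fa /\ CR9 div fa).
Proof.
split.
- case=> [H8 H9].
  pose fa := fun Psi => le (fP _ _ Bel div Psi).
  have R := fun Psi => reprF (Pext _ _ _ _ Hagm Psi) (PP1 _ _ _ _ Hagm Psi) (PP3 _ _ _ Hcl _ Hagm Psi) (PP4 _ _ _ _ Hagm Psi)
                     (PP6 _ _ _ Hcl _ Hagm Psi) (PP7 _ _ _ _ Hagm Psi).
  exists fa; split; [|split; [|split]].
  + split; [|split].
    * move=> Psi; split.
      -- exact: (le_total (Pext _ _ _ _ Hagm Psi) (PP3 _ _ _ Hcl _ Hagm Psi)).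
      -- move=> x y z; exact: (le_trans (Pext _ _ _ _ Hagm Psi) (PP1 _ _ _ _ Hagm Psi) (PP3 _ _ _ Hcl _ Hagm Psi) (PP4 _ _ _ _ Hagm Psi)
                     (PP6 _ _ _ Hcl _ Hagm Psi) (PP7 _ _ _ _ Hagm Psi)).
    * move=> Psi w1 w2 M1 M2; split; [exact: (PP1 _ _ _ _ Hagm Psi _ w1 M1) | exact: (PP1 _ _ _ _ Hagm Psi _ w2 M2)].
    * move=> Psi w1 w2 M1 nM2; exact: (FA2 (PP1 _ _ _ _ Hagm Psi) (PP2 _ _ _ _ Hagm Psi) M1 nM2).
  + move=> Psi a w; split => H.
    * case: ((R Psi _ w).1 ((link _ _ _ _ Hagm Psi a w).1 H)) => [h|h]; [by left | by right].
    * apply: (link _ _ _ _ Hagm Psi a w).2; apply: (R Psi _ w).2.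
      case: H => [h|h]; [by left | by right].
  + move=> Psi a w1 w2 h1 h2.
    have ent : fentails (FNeg a) (phiC (p2 w1 w2)).
      move=> v /= hv; rewrite sat_phiC /p2; apply/norP; split; apply/eqP => e; subst v.
      * by rewrite h1 in hv.
      * by rewrite h2 in hv.
    case: (H8 Psi a _ ent w1) => X Y.
    rewrite /fa /le /fP; split => h.
    * exact: (proj1 (Y (conj h h1))).
    * exact: (proj1 (X (conj h h1))).
  + move=> Psi a w1 w2 h1 h2.
    have ent : fentails a (phiC (p2 w1 w2)).
      move=> v hv; rewrite sat_phiC /p2; apply/norP; split; apply/eqP => e; subst v.
      * by move: h1; rewrite /mods /= hv.
      * by move: h2; rewrite /mods /= hv.
    have hb : mods (FNeg (phiC (p2 w1 w2))) w1 by rewrite /mods /= sat_phiC /p2 eqxx.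
    case: (H9 Psi a _ ent w1) => X Y.
    rewrite /fa /le /fP; split => h.
    * exact: (proj1 (Y (conj h hb))).
    * exact: (proj1 (X (conj h hb))).
- case=> fa [[Ftp [F1 F2]] [R [CR8' CR9']]].
  split.
  + move=> Psi a b ent w.
    have Ha : forall y, mods (FNeg b) y -> mods a y.
      move=> y hy; rewrite /mods; case: (boolP (sat y a)) => // na.
      have := ent y na; by move: hy; rewrite /mods /= => /negbTE ->.
    have Emin : forall w, min_le (mods (FNeg b)) (fa (div Psi a)) w <-> min_le (mods (FNeg b)) (fa Psi) w.
      move=> v; split; case=> hv hm; split => // y hy.
      * exact: (proj2 (CR8' Psi a v y (Ha v hv) (Ha y hy)) (hm y hy)).
      * exact: (proj1 (CR8' Psi a v y (Ha v hv) (Ha y hy)) (hm y hy)).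
    split.
    * case=> h ha; split => //.
      case: ((R (div Psi a) b w).1 h) => [h'|hm].
      -- case: ((R Psi a w).1 h') => [hM|[hna _]].
         ++ by apply: (R Psi b w).2; left.
         ++ by move: hna; rewrite /mods /= ha.
      -- apply: (R Psi b w).2; right; exact: (Emin w).1 hm.
    * case=> h ha; split => //; apply: (R (div Psi a) b w).2.
      case: ((R Psi b w).1 h) => [hM|hm].
      -- by left; apply: (R Psi a w).2; left.
      -- right; exact: (Emin w).2 hm.
  + move=> Psi a b ent w.
    have Hs : forall y, mods (FNeg b) y -> mods (FNeg a) y.
      move=> y hy; rewrite /mods /=; case: (boolP (sat y a)) => // ya.
      have := ent y ya; by move: hy; rewrite /mods /= => /negbTE ->.
    have Emin : forall w, min_le (mods (FNeg b)) (fa (div Psi a)) w <-> min_le (mods (FNeg b)) (fa Psi) w.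
      move=> v; split; case=> hv hm; split => // y hy.
      * exact: (proj2 (CR9' Psi a v y (Hs v hv) (Hs y hy)) (hm y hy)).
      * exact: (proj1 (CR9' Psi a v y (Hs v hv) (Hs y hy)) (hm y hy)).
    split.
    * case=> h hb; split => //.
      case: ((R (div Psi a) b w).1 h) => [h'|hm].
      -- case: ((R Psi a w).1 h') => [hM|[hna hmin]].
         ++ by apply: (R Psi b w).2; left.
         ++ apply: (R Psi b w).2; right; split => // y hy; apply: hmin; exact: Hs.
      -- apply: (R Psi b w).2; right; exact: (Emin w).1 hm.
    * case=> h hb; split => //; apply: (R (div Psi a) b w).2.
      case: ((R Psi b w).1 h) => [hM|hm].
      -- by left; apply: (R Psi a w).2; left.
      -- right; exact: (Emin w).2 hm.
Qed.
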